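(* Let $n\ge 1$ and let $w$ be a word of length $m$ over the alphabet $[n+1]$ that contains, for every permutation $\pi$ of length $n$, a subsequence order-isomorphic to $\pi$. Then $(n+1)\left(\frac{m}{n+1}\right)^n\ge n!$. Consequently $m\ge (n+1)\,(n!/(n+1))^{1/n}$, and in particular $m\ge (1-o(1))\,n^2/e$ as $n\to\infty$.
   Context: A permutation of length $n$ is a word containing each letter of $[n]=\{1,\dots,n\}$ exactly once. Words $u,v$ of length $k$ are order-isomorphic if $u(i)>u(j)\iff v(i)>v(j)$ for all $i,j\in[k]$. A word $w$ contains a subsequence order-isomorphic to $\pi$ if there are indices $i_1<\cdots<i_n$ with $w(i_1)\cdots w(i_n)$ order-isomorphic to $\pi$. *)

(* Defs.v *)
From HB Require Import structures.
From mathcomp Require Import all_boot all_order all_algebra.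
Set Implicit Arguments. Unset Strict Implicit. Unset Printing Implicit Defensive.

Definition is_perm (n : nat) (p : seq nat) : Prop := perm_eq p (iota 1 n).

Definition word_over (k : nat) (w : seq nat) : Prop :=
  all (fun x => (1 <= x) && (x <= k)) w.

Definition order_iso (u v : seq nat) : Prop :=
  size u = size v /\
  forall i j, i < size u -> j < size u ->
    (nth 0 u j < nth 0 u i <-> nth 0 v j < nth 0 v i).

Definition contains_pattern (w pi : seq nat) : Prop :=
  exists u : seq nat, subseq u w /\ order_iso u pi.

(* Main.v *)
Require Import Defs.
From HB Require Import structures.
From mathcomp Require Import all_boot all_order all_algebra zify.
From mathcomp Require Import ring lra.
Import Order.TTheory GRing.Theory Num.Theory.
Set Implicit Arguments. Unset Strict Implicit.

Fixpoint subs (w : seq nat) : seq (seq nat) :=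
  if w is x :: w' then map (cons x) (subs w') ++ subs w' else [:: [::]].

Fixpoint En (k : nat) (xs : seq nat) : nat :=
  match k, xs with
  | 0, _ => 1
  | k'.+1, [::] => 0
  | k'.+1, x :: xs' => x * En k' xs' + En k xs'
  end.

Definition Pk (L : seq nat) (k : nat) (u : seq nat) : bool :=
  [&& uniq u, all (fun a => a \in L) u & size u == k].

Lemma subs_subseq u w : subseq u w -> u \in subs w.
Proof.
elim: w u => [|x w IH] [|y u] //=.
- move=> _; rewrite mem_cat; apply/orP; right; apply: IH; exact: sub0seq.
- case: eqP => [->|_] H; rewrite mem_cat; apply/orP.
    by left; apply: map_f; apply: IH.
  by right; apply: IH.
Qed.

Lemma En_zero k (L : seq nat) : En k (map (fun _ => 0) L) = (k == 0).
Proof. elim: L k => [|a L IH] [|k] //=. by rewrite !IH mul0n. Qed.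

Lemma En0 xs : En 0 xs = 1. Proof. by case: xs. Qed.

Lemma En_incr (f : nat -> nat) x (L : seq nat) k : uniq L ->
  En k (map (fun a => (x == a) + f a) L) =
  En k (map f L) + (if k is j.+1 then (if x \in L then En j (map f (rem x L)) else 0) else 0).
Proof.
elim: L k => [|a L IH] [|k] //= /andP [aL uL].
rewrite inE.
have [xa|xa] := eqP.
- subst a. rewrite eqxx /= (IH k) // (IH k.+1) // (negbTE aL).
  case: k => [|k] /=; lia.
- rewrite /= (IH k) // (IH k.+1) //.
  have xa' : (a == x) = false by apply/eqP => H; apply: xa.
  rewrite xa' /= add0n.
  case: ifP => xL; case: k => [|k] /=; rewrite ?En0; lia.
Qed.

Lemma count_subs (w L : seq nat) k : uniq L ->
  count (Pk L k) (subs w) = En k (map (fun a => count_mem a w) L).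
Proof.
elim: w L k => [|x w IH] L k uL /=.
- rewrite /Pk /= addn0 En_zero; by case: k.
- rewrite count_cat count_map IH // En_incr // addnC.
  congr (_ + _).
  case: k => [|j].
    by rewrite (@eq_count _ _ pred0) ?count_pred0 // => u; rewrite /Pk /= !andbF.
  case: ifP => xL.
  + rewrite -IH; last exact: rem_uniq.
    apply: eq_count => u; rewrite /Pk /= xL /= eqSS.
    have -> : all (fun a => a \in rem x L) u = (x \notin u) && all (fun a => a \in L) u.
      rewrite -has_pred1 -all_predC -all_predI; apply: eq_all => a.
      by rewrite (mem_rem_uniq _ uL) /= inE.
    by case: (x \notin u); case: (uniq u).
  + rewrite -(count_pred0 (subs w)); apply: eq_count => u.
    by rewrite /Pk /= xL /= !andbF.
Qed.
Definition st (u : seq nat) : seq nat :=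
  map (fun x => (count (fun y => y < x) u).+1) u.

Lemma count_nth (p : pred nat) (u : seq nat) :
  count p u = count (fun j => p (nth 0 u j)) (iota 0 (size u)).
Proof. by rewrite -{1}(mkseq_nth 0 u) /mkseq count_map. Qed.

Lemma count_lt_iota n x : 1 <= x <= n ->
  count (fun y => y < x) (iota 1 n) = x.-1.
Proof.
move=> /andP [h1 h2].
have -> : n = x.-1 + (n - x.-1) by lia.
rewrite iotaD count_cat.
rewrite (@eq_in_count _ _ predT (iota 1 x.-1)); last first.
  by move=> y; rewrite mem_iota /=; lia.
rewrite count_predT size_iota.
rewrite (@eq_in_count _ _ pred0 (iota _ _)); last first.
  by move=> y; rewrite mem_iota /=; lia.
by rewrite count_pred0 addn0.
Qed.

Lemma st_perm n pi : is_perm n pi -> st pi = pi.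
Proof.
move=> H; rewrite /st -[RHS]map_id; apply/eq_in_map => x xp.
have := H; move/permP => Hc.
rewrite Hc count_lt_iota; last first.
  by move: xp; rewrite (perm_mem H) mem_iota; lia.
by move: xp; rewrite (perm_mem H) mem_iota; lia.
Qed.

Lemma st_iso u v : order_iso u v -> st u = st v.
Proof.
move=> [sz H].
apply: (@eq_from_nth _ 0); first by rewrite !size_map.
move=> i; rewrite size_map => ilt.
rewrite (nth_map 0) // (nth_map 0) -?sz //.
congr S.
rewrite (count_nth _ u) (count_nth _ v) -sz.
apply: eq_in_count => j; rewrite mem_iota /= => jlt.
by apply/idP/idP => /(H i j ilt jlt).
Qed.

Lemma iso_uniq u v : order_iso u v -> uniq v -> uniq u.
Proof.
move=> [sz H] /(uniqP 0) uv; apply/(uniqP 0) => i j il jl e.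
apply: uv; rewrite ?inE -?sz //.
have h1 : ~ (nth 0 v j < nth 0 v i) by move/(H i j il jl); rewrite e ltnn.
have h2 : ~ (nth 0 v i < nth 0 v j) by move/(H j i jl il); rewrite e ltnn.
apply/eqP; rewrite eqn_leq leqNgt (leqNgt (nth 0 v j)).
by apply/andP; split; apply/negP.
Qed.

Lemma fact_le n w :
  word_over n.+1 w ->
  (forall pi : seq nat, is_perm n pi -> contains_pattern w pi) ->
  n`! <= En n (map (fun a => count_mem a w) (iota 1 n.+1)).
Proof.
move=> wo Hc.
rewrite -count_subs ?iota_uniq //.
rewrite -size_filter -(size_map st).
have -> : n`! = size (permutations (iota 1 n)) by rewrite size_permutations ?iota_uniq // size_iota.
apply: uniq_leq_size; first exact: permutations_uniq.
move=> pi; rewrite mem_permutations => Hp.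
have [u [su iso]] := Hc pi Hp.
rewrite -(st_perm Hp) -(st_iso iso).
apply: map_f; rewrite mem_filter; apply/andP; split; last exact: subs_subseq.
rewrite /Pk; apply/and3P; split.
- apply: iso_uniq iso _; rewrite (perm_uniq Hp); exact: iota_uniq.
- apply/allP => x xu; have xw := mem_subseq su xu.
  move/allP: wo => /(_ x xw) /andP [h1 h2]; rewrite mem_iota; lia.
- by case: iso => -> _; rewrite (perm_size Hp) size_iota.
Qed.
Local Open Scope ring_scope.
Section Ineq.
Variable R : realFieldType.

Fixpoint Er (k : nat) (xs : seq R) : R :=
  match k, xs with
  | 0, _ => 1
  | k'.+1, [::] => 0
  | k'.+1, x :: xs' => x * Er k' xs' + Er k xs'
  end.

Lemma Er0 xs : Er 0 xs = 1. Proof. by case: xs. Qed.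

Lemma Er_big k xs : (size xs < k)%N -> Er k xs = 0.
Proof.
elim: xs k => [|x xs IH] [|k] //= H.
by rewrite !IH ?mulr0 ?addr0 //; apply: ltnW.
Qed.

Lemma Er_size xs : Er (size xs) xs = \prod_(x <- xs) x.
Proof.
elim: xs => [|x xs IH] /=; first by rewrite big_nil.
by rewrite IH Er_big // addr0 big_cons.
Qed.

Lemma bern (a b : R) n : 0 <= a -> 0 <= a + b ->
  a ^+ n.+1 + n.+1%:R * a ^+ n * b <= (a + b) ^+ n.+1.
Proof.
move=> a0 ab0; elim: n => [|n IH].
  by rewrite !expr1 expr0 mulr1 mul1r.
rewrite [(a + b) ^+ n.+2]exprS.
apply: le_trans (ler_wpM2l ab0 IH).
have an : 0 <= a ^+ n by apply: exprn_ge0.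
have e : (a + b) * (a ^+ n.+1 + n.+1%:R * a ^+ n * b) - (a ^+ n.+2 + n.+2%:R * a ^+ n.+1 * b)
   = n.+1%:R * a ^+ n * (b * b).
  rewrite !exprS -[n.+2]addn1 -[n.+1]addn1 !natrD; ring.
rewrite -subr_ge0 e; apply: mulr_ge0; first by apply: mulr_ge0 => //; apply: ler0n.
by rewrite -expr2 sqr_ge0.
Qed.

Lemma amgm k (xs : seq R) : size xs = k.+1 -> all (fun x => 0 <= x) xs ->
  \prod_(x <- xs) x <= ((\sum_(x <- xs) x) / k.+1%:R) ^+ k.+1.
Proof.
elim: k xs => [|k IH] [|x ys] //=.
  by case: ys => //= _ /andP [x0 _]; rewrite big_seq1 big_seq1 divr1 expr1.
move=> [sz] /andP [x0 ys0].
rewrite big_cons big_cons.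
set S := \sum_(y <- ys) y.
set u := S / k.+1%:R.
have S0 : 0 <= S by rewrite /S big_seq; apply: sumr_ge0 => y yi; exact: (allP ys0).
have u0 : 0 <= u by rewrite /u divr_ge0 // ler0n.
apply: le_trans (_ : x * u ^+ k.+1 <= _).
  by apply: ler_wpM2l => //; apply: IH.
have k1 : k.+1%:R != 0 :> R by rewrite pnatr_eq0.
have k2 : k.+2%:R != 0 :> R by rewrite pnatr_eq0.
have := @bern u ((x - u) / k.+2%:R) k.+1 u0.
have ev : u + (x - u) / k.+2%:R = (x + S) / k.+2%:R.
  rewrite /u; rewrite -[k.+2]addn1 natrD; field.
  have kk : 0 <= k%:R :> R := ler0n _ _.
  by apply/andP; split; apply: lt0r_neq0; lra.
rewrite ev; move=> /(_ (divr_ge0 (addr_ge0 x0 S0) (ler0n _ _))).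
have e2 : u ^+ k.+2 + k.+2%:R * u ^+ k.+1 * ((x - u) / k.+2%:R) = x * u ^+ k.+1.
  rewrite exprS; field.
  have kk : 0 <= k%:R :> R := ler0n _ _.
  by apply: lt0r_neq0; lra.
by rewrite e2.
Qed.

Lemma mac k (xs : seq R) : size xs = k.+1 -> all (fun x => 0 <= x) xs ->
  Er k xs <= k.+1%:R * ((\sum_(x <- xs) x) / k.+1%:R) ^+ k.
Proof.
elim: k xs => [|k IH] xs; first by rewrite Er0 expr0 mulr1.
case: xs => [|x ys] //= [sz] /andP [x0 ys0].
rewrite big_cons.
set S := \sum_(y <- ys) y.
set u := S / k.+1%:R.
have S0 : 0 <= S by rewrite /S big_seq; apply: sumr_ge0 => y yi; exact: (allP ys0).
have u0 : 0 <= u by rewrite /u divr_ge0 // ler0n.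
have kk : 0 <= k%:R :> R := ler0n _ _.
have -> : Er k.+1 ys = \prod_(y <- ys) y by rewrite -sz Er_size.
apply: le_trans (_ : x * (k.+1%:R * u ^+ k) + u ^+ k.+1 <= _).
  apply: lerD; last exact: amgm.
  by apply: ler_wpM2l => //; apply: IH.
have := @bern u ((x - u) / k.+2%:R) k u0.
have ev : u + (x - u) / k.+2%:R = (x + S) / k.+2%:R.
  rewrite /u; rewrite -[k.+2]addn1 natrD; field.
  by apply/andP; split; apply: lt0r_neq0; lra.
rewrite ev; move=> /(_ (divr_ge0 (addr_ge0 x0 S0) (ler0n _ _))) H.
have H2 := ler_wpM2l (ler0n R k.+2) H.
apply: le_trans H2.
have e2 : k.+2%:R * (u ^+ k.+1 + k.+1%:R * u ^+ k * ((x - u) / k.+2%:R)) = x * (k.+1%:R * u ^+ k) + u ^+ k.+1.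
  rewrite exprS -[k.+2]addn1 -[k.+1]addn1 !natrD; field.
  by apply: lt0r_neq0; lra.
by rewrite e2.
Qed.
End Ineq.
Local Open Scope nat_scope.

Lemma sum_eq_count (x : nat) (L : seq nat) : \sum_(a <- L) (x == a : nat) = count_mem x L.
Proof. elim: L => [|a L IH]; first by rewrite big_nil. by rewrite big_cons IH /= eq_sym. Qed.

Lemma sum_counts k w : word_over k w ->
  \sum_(a <- iota 1 k) count_mem a w = size w.
Proof.
elim: w => [|x w IH] /=.
  by rewrite big1_seq.
move=> /andP [/andP [h1 h2] wo].
rewrite big_split /= IH // sum_eq_count count_uniq_mem ?iota_uniq //.
by rewrite mem_iota h1 /= add1n ltnS h2.
Qed.

Lemma Er_nat k (xs : seq nat) :
  ((En k xs)%:R : rat) = Er k (map (fun x => (x%:R : rat)) xs).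
Proof.
elim: xs k => [|x xs IH] [|k] //=.
by rewrite natrD natrM !IH.
Qed.

Theorem mainTheorem8 (n : nat) (w : seq nat) :
  (1 <= n)%N ->
  word_over n.+1 w ->
  (forall pi : seq nat, is_perm n pi -> contains_pattern w pi) ->
  ((n`!)%:R <= (n.+1)%:R * ((size w)%:R / (n.+1)%:R) ^+ n :> rat)%R.
Proof.
move=> _ wo Hc.
have H1 := fact_le wo Hc.
apply: (le_trans (y := ((En n (map (fun a => count_mem a w) (iota 1 n.+1)))%:R : rat))).
  by rewrite ler_nat.
rewrite Er_nat.
have -> : ((size w)%:R = \sum_(x <- map (fun x => (x%:R : rat)) (map (fun a => count_mem a w) (iota 1 n.+1))) x)%R.
  by rewrite !big_map -natr_sum sum_counts.
apply: mac.
  by rewrite !size_map size_iota.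
by apply/allP => x /mapP [y _ ->]; apply: ler0n.
Qed.
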